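(* Assume $G$ is connected. Let $S\subset V$ with $\emptyset\ne S\ne V$, and let $R_S=\mathrm{vol}\,S/\mathrm{vol}\,V$; assume $R_S\ne\frac12$. Let $\lambda_2>0$ be the second smallest eigenvalue of $\Delta$. If $$\tau>\tau_t(S):=\frac1{\lambda_2}\log\left(\frac{(\mathrm{vol}\,S)^{1/2}(\mathrm{vol}\,S^c)^{1/2}}{(\mathrm{vol}\,V)^{1/2}\,|R_S-\frac12|\,d_-^{r/2}}\right),$$ then the set $S'=\{i\in V:(e^{-\tau\Delta}\chi_S)_i\ge\frac12\}$ equals $V$ if $R_S>\frac12$, and equals $\emptyset$ if $R_S<\frac12$.
   Context: $G=(V,E)$ is a finite undirected weighted graph with vertex set $V=\{1,\dots,n\}$. The weights satisfy $\omega_{ij}=\omega_{ji}\ge0$, with $\omega_{ij}>0$ iff $\{i,j\}\in E$, and $\omega_{ii}=0$. The degrees are $d_i=\sum_j\omega_{ij}>0$, and $d_-=\min_id_i$. A parameter $r\in[0,1]$ is fixed. For $S\subset V$, $S^c=V\setminus S$, $\chi_S$ is the indicator of $S$, and $\mathrm{vol}\,S=\sum_{i\in S}d_i^r$. The graph Laplacian is $(\Delta u)_i=d_i^{-r}\sum_j\omega_{ij}(u_i-u_j)$, whose eigenvalues (those of the matrix $D^{-r}(D-A)$) are $0=\lambda_1\le\lambda_2\le\dots\le\lambda_n$. $e^{-t\Delta}$ is the solution operator of $\dot u=-\Delta u$. *)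

(* Defs.v *)
From Stdlib Require Import Reals Lra.
Open Scope R_scope.

(* Vertices are 0 .. n-1 (the paper's 1 .. n shifted by one).
   Weights: w : nat -> nat -> R, only the values on 0..n-1 matter. *)

Fixpoint rsum (n : nat) (f : nat -> R) : R :=
  match n with
  | O => 0
  | S m => rsum m f + f m
  end.

Fixpoint rminn (f : nat -> R) (m : nat) : R :=
  match m with
  | O => f 0%nat
  | S k => Rmin (rminn f k) (f (S k))
  end.

Definition deg (n : nat) (w : nat -> nat -> R) (i : nat) : R :=
  rsum n (fun j => w i j).

Definition dmin (n : nat) (w : nat -> nat -> R) : R :=
  rminn (deg n w) (n - 1).

Definition weighted_graph (n : nat) (w : nat -> nat -> R) : Prop :=
  (forall i j, (i < n)%nat -> (j < n)%nat -> w i j = w j i) /\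
  (forall i j, (i < n)%nat -> (j < n)%nat -> 0 <= w i j) /\
  (forall i, (i < n)%nat -> w i i = 0) /\
  (forall i, (i < n)%nat -> 0 < deg n w i).

Inductive reach (n : nat) (w : nat -> nat -> R) (i : nat) : nat -> Prop :=
  | reach_refl : reach n w i i
  | reach_step : forall j k, reach n w i j -> (k < n)%nat -> 0 < w j k ->
                 reach n w i k.

Definition connected (n : nat) (w : nat -> nat -> R) : Prop :=
  forall i j, (i < n)%nat -> (j < n)%nat -> reach n w i j.

Definition chi (S : nat -> bool) (i : nat) : R := if S i then 1 else 0.

Definition vol (n : nat) (w : nat -> nat -> R) (r : R) (S : nat -> bool) : R :=
  rsum n (fun i => chi S i * Rpower (deg n w i) r).

Definition complement (S : nat -> bool) : nat -> bool := fun i => negb (S i).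
Definition fullset : nat -> bool := fun _ => true.

Definition lap (n : nat) (w : nat -> nat -> R) (r : R) (u : nat -> R) (i : nat) : R :=
  / Rpower (deg n w i) r * rsum n (fun j => w i j * (u i - u j)).

(* lam 0 <= lam 1 <= ... <= lam (n-1) is the list of eigenvalues of
   Delta = D^{-r}(D - A), counted with multiplicity: it is sorted, and there is
   a basis v 0, ..., v (n-1) of R^n of eigenvectors with Delta (v k) = lam k v k.
   (Delta is self-adjoint for the d^r-weighted inner product, hence diagonalizable,
   so this list exists and is unique.) *)
Definition eigenvalue_list (n : nat) (w : nat -> nat -> R) (r : R) (lam : nat -> R) : Prop :=
  (forall k, (S k < n)%nat -> lam k <= lam (S k)) /\
  exists v : nat -> nat -> R,
    (forall k i, (k < n)%nat -> (i < n)%nat -> lap n w r (v k) i = lam k * v k i) /\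
    (forall c : nat -> R,
        (forall i, (i < n)%nat -> rsum n (fun k => c k * v k i) = 0) ->
        forall k, (k < n)%nat -> c k = 0).

(* u is the solution of du/dt = - Delta u with u(0) = u0, i.e. u t = e^{-t Delta} u0 *)
Definition heat_solution (n : nat) (w : nat -> nat -> R) (r : R)
    (u0 : nat -> R) (u : R -> nat -> R) : Prop :=
  (forall i, (i < n)%nat -> u 0 i = u0 i) /\
  (forall i t, (i < n)%nat ->
     derivable_pt_lim (fun s => u s i) t (- lap n w r (u t) i)).

(* Main.v *)
Require Import Defs.
From Stdlib Require Import Reals Lra Lia Arith.
Open Scope R_scope.

Lemma rsum_ext n f g : (forall i, (i < n)%nat -> f i = g i) -> rsum n f = rsum n g.
Proof. induction n; simpl; intros H; auto. rewrite IHn by (intros; apply H; lia). rewrite H by lia. auto. Qed.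

Lemma rsum_plus n f g : rsum n (fun i => f i + g i) = rsum n f + rsum n g.
Proof. induction n; simpl; [lra|]. rewrite IHn; lra. Qed.

Lemma rsum_scal n a f : rsum n (fun i => a * f i) = a * rsum n f.
Proof. induction n; simpl; [lra|]. rewrite IHn; lra. Qed.

Lemma rsum_mulr n a f : rsum n (fun i => f i * a) = rsum n f * a.
Proof. induction n; simpl; [lra|]. rewrite IHn; lra. Qed.

Lemma rsum_0 n : rsum n (fun _ => 0) = 0.
Proof. induction n; simpl; lra. Qed.

Lemma rsum_minus n f g : rsum n (fun i => f i - g i) = rsum n f - rsum n g.
Proof. induction n; simpl; [lra|]. rewrite IHn; lra. Qed.

Lemma rsum_swap n m f : rsum n (fun i => rsum m (fun j => f i j)) = rsum m (fun j => rsum n (fun i => f i j)).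
Proof. induction n; simpl. now rewrite rsum_0. rewrite IHn, <- rsum_plus. auto. Qed.

Lemma rsum_nonneg n f : (forall i, (i < n)%nat -> 0 <= f i) -> 0 <= rsum n f.
Proof. induction n; simpl; intros H; [lra|]. assert (0 <= rsum n f) by (apply IHn; intros; apply H; lia). specialize (H n ltac:(lia)). lra.
Qed.

Lemma rsum_le_term n f i : (forall k, (k < n)%nat -> 0 <= f k) -> (i < n)%nat -> f i <= rsum n f.
Proof. induction n; simpl; intros H Hi; [lia|].
  assert (0 <= rsum n f) by (apply rsum_nonneg; intros; apply H; lia).
  destruct (Nat.eq_dec i n). subst; lra.
  assert (f i <= rsum n f) by (apply IHn; [intros; apply H; lia|lia]). specialize (H n ltac:(lia)). lra. Qed.

Lemma rsum_two n f i j : (forall k, (k < n)%nat -> 0 <= f k) -> (i < n)%nat -> (j < n)%nat -> i <> j -> f i + f j <= rsum n f.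
Proof. induction n; simpl; intros H Hi Hj Hij; [lia|].
  assert (0 <= rsum n f) by (apply rsum_nonneg; intros; apply H; lia).
  destruct (Nat.eq_dec i n). subst. assert (f j <= rsum n f) by (apply rsum_le_term; [intros; apply H; lia|lia]). lra.
  destruct (Nat.eq_dec j n). subst. assert (f i <= rsum n f) by (apply rsum_le_term; [intros; apply H; lia|lia]). lra.
  assert (f i + f j <= rsum n f) by (apply IHn; [intros; apply H; lia|lia|lia|lia]). specialize (H n ltac:(lia)). lra. Qed.

Lemma rsum_pos n f i : (forall k, (k < n)%nat -> 0 <= f k) -> (i < n)%nat -> 0 < f i -> 0 < rsum n f.
Proof. intros. assert (f i <= rsum n f) by (apply rsum_le_term; auto). lra. Qed.

Lemma rsum_zero_terms n f : (forall k, (k < n)%nat -> 0 <= f k) -> rsum n f = 0 -> forall i, (i < n)%nat -> f i = 0.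
Proof. intros H H0 i Hi. assert (f i <= rsum n f) by (apply rsum_le_term; auto). specialize (H i Hi). lra. Qed.

Lemma rsum_delta n p a : (p < n)%nat -> rsum n (fun k => if Nat.eqb k p then a else 0) = a.
Proof. induction n; simpl; intros Hp; [lia|]. destruct (Nat.eq_dec p n).
  subst. rewrite Nat.eqb_refl. rewrite (rsum_ext _ _ (fun _ => 0)). rewrite rsum_0; lra.
  intros i Hi. destruct (Nat.eqb_spec i n); [lia|auto].
  rewrite IHn by lia. destruct (Nat.eqb_spec n p); [lia|lra]. Qed.

Definition sk (p k : nat) : nat := if Nat.ltb k p then k else S k.

Lemma rsum_skip m p g : (p < S m)%nat -> rsum (S m) g = rsum m (fun k => g (sk p k)) + g p.
Proof. revert p. induction m; intros p Hp.
  - simpl. assert (p = 0%nat) by lia. subst. lra.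
  - destruct (Nat.eq_dec p (S m)).
    + subst. change (rsum (S m) g + g (S m) = rsum (S m) (fun k => g (sk (S m) k)) + g (S m)).
      f_equal. apply rsum_ext. intros i Hi. unfold sk. destruct (Nat.ltb_spec i (S m)); auto; lia.
    + change (rsum (S m) g + g (S m) = rsum m (fun k => g (sk p k)) + g (sk p m) + g p).
      rewrite (IHm p) by lia. replace (sk p m) with (S m). lra. unfold sk. destruct (Nat.ltb_spec m p); [lia|auto]. Qed.

From Stdlib Require Import Classical.

Lemma sk_neq p k : sk p k <> p.
Proof. unfold sk. destruct (Nat.ltb_spec k p); lia. Qed.
Lemma sk_inv p k : (if Nat.ltb (sk p k) p then sk p k else pred (sk p k)) = k.
Proof. unfold sk. destruct (Nat.ltb_spec k p). destruct (Nat.ltb_spec k p); lia.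
  destruct (Nat.ltb_spec (S k) p); lia. Qed.
Lemma sk_lt p k m : (k < m)%nat -> (sk p k < S m)%nat.
Proof. unfold sk. destruct (Nat.ltb_spec k p); lia. Qed.

Lemma dep n : forall m (x : nat -> nat -> R), (n < m)%nat ->
  exists c : nat -> R, (exists k, (k < m)%nat /\ c k <> 0) /\
    forall i, (i < n)%nat -> rsum m (fun k => c k * x k i) = 0.
Proof.
  induction n; intros m x Hm.
  - exists (fun k => if Nat.eqb k 0 then 1 else 0). split.
    + exists 0%nat. split; [lia|]. simpl. lra.
    + intros; lia.
  - destruct (classic (forall k, (k < m)%nat -> x k n = 0)) as [Hz|Hnz].
    + destruct (IHn m x ltac:(lia)) as [c [Hc Hs]]. exists c. split; auto.
      intros i Hi. destruct (Nat.eq_dec i n).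
      * subst. rewrite (rsum_ext _ _ (fun _ => 0)). apply rsum_0. intros k Hk. rewrite Hz by auto. ring.
      * apply Hs; lia.
    + apply not_all_ex_not in Hnz. destruct Hnz as [p Hp].
      apply imply_to_and in Hp. destruct Hp as [Hpm Hpn].
      destruct m as [|m]; [lia|].
      set (piv := x p n) in *.
      set (y := fun k i => x (sk p k) i - x (sk p k) n / piv * x p i).
      destruct (IHn m y ltac:(lia)) as [c' [[k0 [Hk0 Hck0]] Hs]].
      set (c := fun j => if Nat.eqb j p then - rsum m (fun k => c' k * x (sk p k) n) / piv
                      else c' (if Nat.ltb j p then j else pred j)).
      assert (Hcs : forall k, c (sk p k) = c' k).
      { intros k. unfold c. destruct (Nat.eqb_spec (sk p k) p). exfalso; eapply sk_neq; eauto.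
        now rewrite sk_inv. }
      exists c. split.
      * exists (sk p k0). split. apply sk_lt; auto. now rewrite Hcs.
      * intros i Hi. rewrite (rsum_skip m p) by lia.
        rewrite (rsum_ext _ _ (fun k => c' k * x (sk p k) i)) by (intros; now rewrite Hcs).
        assert (Hcp : c p = - rsum m (fun k => c' k * x (sk p k) n) / piv).
        { unfold c. now rewrite Nat.eqb_refl. }
        rewrite Hcp.
        destruct (Nat.eq_dec i n).
        -- subst. fold piv. field. auto.
        -- specialize (Hs i ltac:(lia)). unfold y in Hs.
           rewrite (rsum_ext _ _ (fun k => c' k * x (sk p k) i - (c' k * x (sk p k) n) * (x p i / piv))) in Hs
             by (intros; field; auto).
           rewrite rsum_minus, rsum_mulr in Hs.
           replace (rsum m (fun k => c' k * x (sk p k) i)) with (rsum m (fun k => c' k * x (sk p k) n) * (x p i / piv)) by lra.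
           field. auto.
Qed.

Lemma span n (v : nat -> nat -> R) :
  (forall c : nat -> R,
        (forall i, (i < n)%nat -> rsum n (fun k => c k * v k i) = 0) ->
        forall k, (k < n)%nat -> c k = 0) ->
  forall f : nat -> R, exists c : nat -> R, forall i, (i < n)%nat -> f i = rsum n (fun k => c k * v k i).
Proof.
  intros Hind f.
  set (x := fun k i => if Nat.eqb k n then f i else v k i).
  destruct (dep n (S n) x ltac:(lia)) as [c [[k0 [Hk0 Hck0]] Hs]].
  assert (Hx : forall i, rsum n (fun k => c k * x k i) = rsum n (fun k => c k * v k i)).
  { intros i. apply rsum_ext. intros k Hk. unfold x. destruct (Nat.eqb_spec k n); [lia|auto]. }
  destruct (Req_dec (c n) 0) as [Hcn|Hcn].
  - exfalso. assert (k0 < n)%nat.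
    { destruct (Nat.eq_dec k0 n); [subst; contradiction|lia]. }
    apply Hck0. apply (Hind c); auto. intros i Hi. specialize (Hs i Hi). simpl in Hs.
    rewrite Hx in Hs. unfold x in Hs. rewrite Nat.eqb_refl, Hcn in Hs. lra.
  - exists (fun k => - c k / c n). intros i Hi. specialize (Hs i Hi). simpl in Hs. rewrite Hx in Hs.
    unfold x in Hs. rewrite Nat.eqb_refl in Hs.
    rewrite (rsum_ext _ _ (fun k => (c k * v k i) * (- / c n))) by (intros; field; auto).
    rewrite rsum_mulr. replace (rsum n (fun k => c k * v k i)) with (- (c n * f i)) by lra. field. auto.
Qed.

Definition Dw n w r i := Rpower (deg n w i) r.
Definition ip n w r (x y : nat -> R) := rsum n (fun i => Dw n w r i * x i * y i).
Definition Bf n (w : nat -> nat -> R) (x y : nat -> R) := rsum n (fun i => x i * rsum n (fun j => w i j * (y i - y j))).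

Lemma Dw_pos n w r i : 0 < Dw n w r i.
Proof. unfold Dw, Rpower. apply exp_pos. Qed.

Lemma Bf_half n w x y : (forall i j, (i < n)%nat -> (j < n)%nat -> w i j = w j i) ->
  Bf n w x y = / 2 * rsum n (fun i => rsum n (fun j => w i j * (x i - x j) * (y i - y j))).
Proof.
  intros Hs.
  assert (H1 : Bf n w x y = rsum n (fun i => rsum n (fun j => w i j * x i * (y i - y j)))).
  { unfold Bf. apply rsum_ext. intros i Hi. rewrite <- rsum_scal. apply rsum_ext. intros; ring. }
  assert (H2 : Bf n w x y = rsum n (fun i => rsum n (fun j => w i j * x j * (y j - y i)))).
  { rewrite H1, rsum_swap. apply rsum_ext. intros i Hi. apply rsum_ext. intros j Hj. rewrite Hs by auto. ring. }
  rewrite (rsum_ext _ _ (fun i => rsum n (fun j => w i j * x i * (y i - y j)) + rsum n (fun j => w i j * x j * (y j - y i)))).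
  rewrite rsum_plus, <- H1, <- H2. lra.
  intros i Hi. rewrite <- rsum_plus. apply rsum_ext. intros; ring.
Qed.

Lemma Bf_sym n w x y : (forall i j, (i < n)%nat -> (j < n)%nat -> w i j = w j i) -> Bf n w x y = Bf n w y x.
Proof. intros Hs. rewrite !Bf_half by auto. f_equal. apply rsum_ext; intros; apply rsum_ext; intros; ring. Qed.

Lemma Bf_nonneg n w x : (forall i j, (i < n)%nat -> (j < n)%nat -> w i j = w j i) ->
  (forall i j, (i < n)%nat -> (j < n)%nat -> 0 <= w i j) -> 0 <= Bf n w x x.
Proof. intros Hs Hp. rewrite Bf_half by auto. apply Rmult_le_pos. lra.
  apply rsum_nonneg; intros i Hi; apply rsum_nonneg; intros j Hj. rewrite Rmult_assoc. apply Rmult_le_pos. apply Hp; auto. apply Rle_0_sqr. Qed.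

Lemma Bf_ext n w x x' y y' : (forall i, (i < n)%nat -> x i = x' i) -> (forall i, (i < n)%nat -> y i = y' i) ->
  Bf n w x y = Bf n w x' y'.
Proof. intros Hx Hy. unfold Bf. apply rsum_ext. intros i Hi. rewrite Hx by auto. f_equal.
  apply rsum_ext. intros j Hj. rewrite !Hy by auto. auto. Qed.

Lemma Bf_shift n w x y a : (forall i j, (i < n)%nat -> (j < n)%nat -> w i j = w j i) ->
  Bf n w x (fun i => y i - a) = Bf n w x y.
Proof. intros Hs. rewrite !Bf_half by auto. f_equal. apply rsum_ext; intros; apply rsum_ext; intros; ring. Qed.

Lemma Bf_const n w x a : (forall i j, (i < n)%nat -> (j < n)%nat -> w i j = w j i) ->
  Bf n w (fun _ => a) x = 0.
Proof. intros Hs. rewrite Bf_half by auto. rewrite (rsum_ext _ _ (fun _ => 0)). rewrite rsum_0; ring.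
  intros. rewrite (rsum_ext _ _ (fun _ => 0)). apply rsum_0. intros; ring. Qed.

Lemma ip_lap n w r x y : ip n w r x (lap n w r y) = Bf n w x y.
Proof. unfold ip, Bf, lap. apply rsum_ext. intros i Hi. pose proof (Dw_pos n w r i). unfold Dw in *.
  field. lra. Qed.

Lemma ip_ext n w r x x' y y' : (forall i, (i < n)%nat -> x i = x' i) -> (forall i, (i < n)%nat -> y i = y' i) ->
  ip n w r x y = ip n w r x' y'.
Proof. intros Hx Hy. unfold ip. apply rsum_ext. intros i Hi. rewrite Hx, Hy by auto. auto. Qed.

Lemma lap_ext n w r x x' i : (forall j, (j < n)%nat -> x j = x' j) -> (i < n)%nat -> lap n w r x i = lap n w r x' i.
Proof. intros Hx Hi. unfold lap. f_equal. apply rsum_ext. intros j Hj. rewrite !Hx by auto. auto. Qed.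

Lemma lap_lin n w r m (c : nat -> R) (x : nat -> nat -> R) i :
  lap n w r (fun j => rsum m (fun k => c k * x k j)) i = rsum m (fun k => c k * lap n w r (x k) i).
Proof. unfold lap.
  rewrite (rsum_ext _ (fun k => c k * (/ Rpower (deg n w i) r * rsum n (fun j => w i j * (x k i - x k j))))
     (fun k => / Rpower (deg n w i) r * (c k * rsum n (fun j => w i j * (x k i - x k j))))) by (intros; ring).
  rewrite rsum_scal. f_equal.
  rewrite (rsum_ext _ _ (fun j => rsum m (fun k => c k * (w i j * (x k i - x k j))))).
  rewrite rsum_swap. apply rsum_ext. intros. apply rsum_scal.
  intros j Hj. rewrite <- rsum_minus, <- rsum_scal. apply rsum_ext. intros; ring.
Qed.

Lemma ip_lin_l n w r m (a : nat -> R) (x : nat -> nat -> R) y :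
  ip n w r (fun i => rsum m (fun k => a k * x k i)) y = rsum m (fun k => a k * ip n w r (x k) y).
Proof. unfold ip.
  rewrite (rsum_ext _ _ (fun i => rsum m (fun k => a k * (Dw n w r i * x k i * y i)))).
  rewrite rsum_swap. apply rsum_ext. intros. apply rsum_scal.
  intros i Hi. rewrite <- rsum_scal, <- rsum_mulr. apply rsum_ext. intros; ring.
Qed.

Lemma ip_sym n w r x y : ip n w r x y = ip n w r y x.
Proof. unfold ip. apply rsum_ext; intros; ring. Qed.

Lemma ip_bilin n w r m (a b : nat -> R) (x y : nat -> nat -> R) :
  ip n w r (fun i => rsum m (fun k => a k * x k i)) (fun i => rsum m (fun l => b l * y l i))
  = rsum m (fun k => rsum m (fun l => a k * b l * ip n w r (x k) (y l))).
Proof. rewrite ip_lin_l. apply rsum_ext. intros k Hk. rewrite ip_sym, ip_lin_l, <- rsum_scal.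
  apply rsum_ext. intros; rewrite ip_sym; ring. Qed.

Lemma ip_nonneg n w r x : 0 <= ip n w r x x.
Proof. apply rsum_nonneg. intros. pose proof (Dw_pos n w r i). rewrite Rmult_assoc. apply Rmult_le_pos; nra. Qed.


Lemma G_rel n w r lam v k l :
  (forall i j, (i < n)%nat -> (j < n)%nat -> w i j = w j i) ->
  (forall k i, (k < n)%nat -> (i < n)%nat -> lap n w r (v k) i = lam k * v k i) ->
  (k < n)%nat -> (l < n)%nat ->
  lam l * ip n w r (v k) (v l) = lam k * ip n w r (v k) (v l).
Proof. intros Hs Hev Hk Hl.
  assert (A : forall a b, (a < n)%nat -> (b < n)%nat -> lam b * ip n w r (v a) (v b) = Bf n w (v a) (v b)).
  { intros a b Ha Hb. rewrite <- (ip_lap n w r). unfold ip. rewrite <- rsum_scal. apply rsum_ext. intros i Hi.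
    rewrite Hev by auto. ring. }
  rewrite A by auto. rewrite Bf_sym by auto. rewrite <- A by auto. rewrite ip_sym. auto. Qed.

Lemma v_nonzero n (v : nat -> nat -> R) k :
  (forall c : nat -> R,
        (forall i, (i < n)%nat -> rsum n (fun k => c k * v k i) = 0) ->
        forall k, (k < n)%nat -> c k = 0) -> (k < n)%nat -> exists i, (i < n)%nat /\ v k i <> 0.
Proof. intros Hind Hk. apply NNPP. intros Hn.
  assert (H := Hind (fun j => if Nat.eqb j k then 1 else 0)).
  assert (1 = 0). { replace 1 with (if Nat.eqb k k then 1 else 0) by (now rewrite Nat.eqb_refl).
    apply H; auto. intros i Hi. rewrite (rsum_ext _ _ (fun j => if Nat.eqb j k then v k i else 0)).
    rewrite rsum_delta by auto. apply NNPP; intros Hv. apply Hn. exists i; auto.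
    intros j Hj. destruct (Nat.eqb_spec j k); subst; ring. }
  lra. Qed.

Lemma G_pos n w r (v : nat -> nat -> R) k :
  (forall c : nat -> R,
        (forall i, (i < n)%nat -> rsum n (fun k => c k * v k i) = 0) ->
        forall k, (k < n)%nat -> c k = 0) -> (k < n)%nat -> 0 < ip n w r (v k) (v k).
Proof. intros Hind Hk. destruct (v_nonzero n v k Hind Hk) as [i [Hi Hv]].
  apply (rsum_pos _ _ i); auto.
  intros j _. pose proof (Dw_pos n w r j). rewrite Rmult_assoc. apply Rmult_le_pos; nra.
  pose proof (Dw_pos n w r i). rewrite Rmult_assoc. apply Rmult_lt_0_compat; auto.
  assert (0 < v k i * v k i) by (apply Rsqr_pos_lt; auto). auto. Qed.

Lemma lam_nonneg n w r lam (v : nat -> nat -> R) k :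
  (forall i j, (i < n)%nat -> (j < n)%nat -> w i j = w j i) ->
  (forall i j, (i < n)%nat -> (j < n)%nat -> 0 <= w i j) ->
  (forall k i, (k < n)%nat -> (i < n)%nat -> lap n w r (v k) i = lam k * v k i) ->
  (forall c : nat -> R,
        (forall i, (i < n)%nat -> rsum n (fun k => c k * v k i) = 0) ->
        forall k, (k < n)%nat -> c k = 0) -> (k < n)%nat -> 0 <= lam k.
Proof. intros Hs Hp Hev Hind Hk. pose proof (G_pos n w r v k Hind Hk).
  assert (lam k * ip n w r (v k) (v k) = Bf n w (v k) (v k)).
  { rewrite <- (ip_lap n w r). unfold ip. rewrite <- rsum_scal. apply rsum_ext. intros i Hi. rewrite Hev by auto. ring. }
  pose proof (Bf_nonneg n w (v k) Hs Hp). nra. Qed.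

Lemma poinc_core n w r lam v c mu f :
  (forall i j, (i < n)%nat -> (j < n)%nat -> w i j = w j i) ->
  (forall k i, (k < n)%nat -> (i < n)%nat -> lap n w r (v k) i = lam k * v k i) ->
  (forall k, (k < n)%nat -> c k <> 0 -> mu <= lam k) ->
  (forall i, (i < n)%nat -> f i = rsum n (fun k => c k * v k i)) ->
  mu * ip n w r f f <= Bf n w f f.
Proof. intros Hs Hev Hc Hf.
  assert (HB : Bf n w f f = rsum n (fun k => rsum n (fun l => c k * (c l * lam l) * ip n w r (v k) (v l)))).
  { rewrite <- (ip_lap n w r). rewrite <- ip_bilin. apply ip_ext; auto. intros i Hi.
    rewrite (lap_ext _ _ _ _ _ _ Hf Hi). rewrite lap_lin. apply rsum_ext. intros k Hk. rewrite Hev by auto. ring. }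
  assert (HE : ip n w r f f = rsum n (fun k => rsum n (fun l => c k * c l * ip n w r (v k) (v l)))).
  { rewrite <- ip_bilin. apply ip_ext; auto. }
  set (s := fun k => sqrt (lam k - mu)).
  pose proof (ip_nonneg n w r (fun i => rsum n (fun k => (c k * s k) * v k i))) as Hg.
  rewrite ip_bilin in Hg.
  assert (Hd : Bf n w f f - mu * ip n w r f f = rsum n (fun k => rsum n (fun l => c k * s k * (c l * s l) * ip n w r (v k) (v l)))).
  { rewrite HB, HE, <- rsum_scal, <- rsum_minus. apply rsum_ext. intros k Hk.
    rewrite <- rsum_scal, <- rsum_minus. apply rsum_ext. intros l Hl.
    destruct (Req_dec (c k) 0) as [E|E]. rewrite E; ring.
    destruct (Req_dec (c l) 0) as [E'|E']. rewrite E'; ring.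
    set (G := ip n w r (v k) (v l)).
    destruct (Req_dec G 0) as [EG|EG]. rewrite EG; ring.
    pose proof (G_rel n w r lam v k l Hs Hev Hk Hl) as HR. fold G in HR.
    assert (lam l = lam k) by (apply (Rmult_eq_reg_r G); auto).
    unfold s. rewrite H. pose proof (Hc k Hk E).
    replace (c k * sqrt (lam k - mu) * (c l * sqrt (lam k - mu)) * G) with (c k * c l * G * (sqrt (lam k - mu) * sqrt (lam k - mu))) by ring.
    rewrite sqrt_sqrt by lra. ring. }
  lra. Qed.

Lemma sorted_ge n (lam : nat -> R) : (forall k, (S k < n)%nat -> lam k <= lam (S k)) ->
  forall k, (1 <= k)%nat -> (k < n)%nat -> lam 1%nat <= lam k.
Proof. intros Hs k. induction k; intros H1 H2. lia. destruct (Nat.eq_dec k 0). subst; lra.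
  specialize (IHk ltac:(lia) ltac:(lia)). specialize (Hs k H2). lra. Qed.

Lemma lap_const n w r a i : lap n w r (fun _ => a) i = 0.
Proof. unfold lap. rewrite (rsum_ext _ _ (fun _ => 0)). rewrite rsum_0; ring. intros; ring. Qed.

Lemma poincare n w r lam v f :
  (1 < n)%nat ->
  (forall i j, (i < n)%nat -> (j < n)%nat -> w i j = w j i) ->
  (forall i j, (i < n)%nat -> (j < n)%nat -> 0 <= w i j) ->
  (forall k, (S k < n)%nat -> lam k <= lam (S k)) ->
  (forall k i, (k < n)%nat -> (i < n)%nat -> lap n w r (v k) i = lam k * v k i) ->
  (forall c : nat -> R,
        (forall i, (i < n)%nat -> rsum n (fun k => c k * v k i) = 0) ->
        forall k, (k < n)%nat -> c k = 0) ->
  ip n w r f (fun _ => 1) = 0 ->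
  lam 1%nat * ip n w r f f <= Bf n w f f.
Proof. intros Hn Hs Hp Hsort Hev Hind Hf1.
  pose proof (sorted_ge n lam Hsort) as Hge.
  destruct (span n v Hind f) as [c Hc].
  pose proof (Hsort 0%nat Hn) as H01.
  destruct (Rlt_dec (lam 0%nat) (lam 1%nat)) as [Hlt|Hnlt].
  2:{ apply (poinc_core n w r lam v c); auto. intros k Hk _. destruct k. lra. apply Hge; lia. }
  destruct (span n v Hind (fun _ => 1)) as [e He].
  assert (Hel : forall k, (k < n)%nat -> e k * lam k = 0).
  { apply Hind. intros i Hi.
    rewrite (rsum_ext _ _ (fun k => e k * lap n w r (v k) i)) by (intros; rewrite Hev by auto; ring).
    rewrite <- lap_lin. rewrite (lap_ext _ _ _ _ (fun _ => 1)); auto. apply lap_const.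
    intros j Hj. simpl. rewrite (He j Hj). auto. }
  pose proof (lam_nonneg n w r lam v 0 Hs Hp Hev Hind ltac:(lia)) as H0.
  assert (He0 : forall k, (1 <= k)%nat -> (k < n)%nat -> e k = 0).
  { intros k H1 H2. specialize (Hel k H2). specialize (Hge k H1 H2).
    apply (Rmult_eq_reg_r (lam k)). lra. lra. }
  assert (Hone : forall i, (i < n)%nat -> 1 = e 0%nat * v 0%nat i).
  { intros i Hi. rewrite (He i Hi).
    rewrite (rsum_ext _ _ (fun k => if Nat.eqb k 0 then e 0%nat * v 0%nat i else 0)).
    apply rsum_delta; lia.
    intros k Hk. destruct (Nat.eqb_spec k 0). subst; auto. rewrite He0 by lia. ring. }
  assert (Hip : ip n w r f (fun _ => 1) = e 0%nat * ip n w r f (v 0%nat)).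
  { rewrite (ip_ext _ _ _ f f _ (fun i => e 0%nat * v 0%nat i)); auto.
    unfold ip. rewrite <- rsum_scal. apply rsum_ext; intros; ring. }
  assert (Hfv : ip n w r f (v 0%nat) = c 0%nat * ip n w r (v 0%nat) (v 0%nat)).
  { rewrite (ip_ext _ _ _ f (fun i => rsum n (fun k => c k * v k i)) (v 0%nat) (v 0%nat)); auto.
    rewrite ip_lin_l.
    rewrite (rsum_ext _ _ (fun k => if Nat.eqb k 0 then c 0%nat * ip n w r (v 0%nat) (v 0%nat) else 0)).
    apply rsum_delta; lia.
    intros k Hk. destruct (Nat.eqb_spec k 0). subst; auto.
    pose proof (G_rel n w r lam v k 0 Hs Hev Hk ltac:(lia)) as HR.
    assert (lam 1%nat <= lam k) by (apply Hge; lia).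
    assert (ip n w r (v k) (v 0%nat) = 0).
    { apply (Rmult_eq_reg_l (lam k - lam 0%nat)). lra. lra. }
    rewrite H1; ring. }
  assert (Hne0 : e 0%nat <> 0). { intros E. specialize (Hone 0%nat ltac:(lia)). rewrite E in Hone. lra. }
  pose proof (G_pos n w r v 0 Hind ltac:(lia)).
  assert (Hc0 : c 0%nat = 0).
  { rewrite Hip, Hfv in Hf1. apply Rmult_integral in Hf1. destruct Hf1 as [E|E]. contradiction.
    apply Rmult_integral in E. destruct E; auto. lra. }
  apply (poinc_core n w r lam v c); auto. intros k Hk Hck. destruct k. contradiction. apply Hge; lia.
Qed.

Lemma Bf0_const n w x :
  (forall i j, (i < n)%nat -> (j < n)%nat -> w i j = w j i) ->
  (forall i j, (i < n)%nat -> (j < n)%nat -> 0 <= w i j) ->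
  connected n w -> Bf n w x x = 0 -> forall j, (j < n)%nat -> x j = x 0%nat.
Proof. intros Hs Hp Hc HB.
  rewrite Bf_half in HB by auto.
  assert (H0 : rsum n (fun i => rsum n (fun j => w i j * (x i - x j) * (x i - x j))) = 0) by lra.
  assert (Hnn : forall i j, (i < n)%nat -> (j < n)%nat -> 0 <= w i j * (x i - x j) * (x i - x j)).
  { intros i j Hi Hj. rewrite Rmult_assoc. apply Rmult_le_pos. auto. apply Rle_0_sqr. }
  assert (Ht : forall i j, (i < n)%nat -> (j < n)%nat -> w i j * (x i - x j) * (x i - x j) = 0).
  { intros i j Hi Hj. apply (rsum_zero_terms n (fun j => w i j * (x i - x j) * (x i - x j))); auto.
    apply (rsum_zero_terms n (fun i => rsum n (fun j => w i j * (x i - x j) * (x i - x j)))); auto.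
    intros; apply rsum_nonneg; auto. }
  assert (Hr : forall j, reach n w 0 j -> (0 < n)%nat -> (j < n)%nat /\ x j = x 0%nat).
  { intros j Hrj. induction Hrj; intros Hn. split; auto.
    destruct (IHHrj Hn) as [Hj Hx]. split; auto.
    specialize (Ht j k Hj H). rewrite Rmult_assoc in Ht. apply Rmult_integral in Ht.
    destruct Ht as [E|E]. lra. assert (x j - x k = 0) by nra. lra. }
  intros j Hj. apply Hr; [apply Hc|]; lia.
Qed.

Lemma lam1_pos n w r lam v :
  (1 < n)%nat ->
  (forall i j, (i < n)%nat -> (j < n)%nat -> w i j = w j i) ->
  (forall i j, (i < n)%nat -> (j < n)%nat -> 0 <= w i j) ->
  connected n w ->
  (forall k, (S k < n)%nat -> lam k <= lam (S k)) ->
  (forall k i, (k < n)%nat -> (i < n)%nat -> lap n w r (v k) i = lam k * v k i) ->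
  (forall c : nat -> R,
        (forall i, (i < n)%nat -> rsum n (fun k => c k * v k i) = 0) ->
        forall k, (k < n)%nat -> c k = 0) ->
  0 < lam 1%nat.
Proof. intros Hn Hs Hp Hc Hsort Hev Hind.
  destruct (Rlt_dec 0 (lam 1%nat)) as [|Hle]; auto. exfalso.
  pose proof (lam_nonneg n w r lam v 0 Hs Hp Hev Hind ltac:(lia)).
  pose proof (lam_nonneg n w r lam v 1 Hs Hp Hev Hind ltac:(lia)).
  pose proof (Hsort 0%nat Hn).
  assert (Hz : forall k, (k < 2)%nat -> forall j, (j < n)%nat -> v k j = v k 0%nat).
  { intros k Hk. apply (Bf0_const n w); auto.
    assert (lam k = 0) by (destruct k as [|[|]]; lia || lra).
    rewrite <- (ip_lap n w r). rewrite (ip_ext _ _ _ (v k) (v k) _ (fun i => lam k * v k i)); auto.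
    unfold ip. rewrite (rsum_ext _ _ (fun _ => 0)). apply rsum_0. intros; rewrite H2; ring.
    intros; apply Hev; lia. }
  destruct (v_nonzero n v 0 Hind ltac:(lia)) as [i0 [Hi0 Hv0]].
  rewrite (Hz 0%nat ltac:(lia) i0 Hi0) in Hv0.
  assert (Hc1 := Hind (fun k => if Nat.eqb k 0 then v 1%nat 0%nat else if Nat.eqb k 1 then - v 0%nat 0%nat else 0)).
  assert (- v 0%nat 0%nat = 0); [|lra].
  apply (fun H => Hc1 H 1%nat); [|lia].
  intros i Hi.
  rewrite (rsum_ext _ _ (fun k => (if Nat.eqb k 0 then v 1%nat 0%nat * v 0%nat i else 0) + (if Nat.eqb k 1 then - v 0%nat 0%nat * v 1%nat i else 0))).
  rewrite rsum_plus, !rsum_delta by lia.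
  rewrite (Hz 0%nat ltac:(lia) i Hi), (Hz 1%nat ltac:(lia) i Hi). ring.
  intros k Hk. destruct (Nat.eqb_spec k 0) as [E0|E0]; destruct (Nat.eqb_spec k 1) as [E1|E1]; subst; simpl; try lia; try ring.
Qed.

Lemma dsum n (g : nat -> R -> R) (g' : nat -> R) t :
  (forall i, (i < n)%nat -> derivable_pt_lim (g i) t (g' i)) ->
  derivable_pt_lim (fun s => rsum n (fun i => g i s)) t (rsum n g').
Proof. induction n; intros H; simpl.
  - apply (derivable_pt_lim_const 0 t).
  - apply (derivable_pt_lim_plus (fun s => rsum n (fun i => g i s)) (g n)).
    apply IHn; intros; apply H; lia. apply H; lia. Qed.

Lemma dmul f g x a b : derivable_pt_lim f x a -> derivable_pt_lim g x b ->
  derivable_pt_lim (fun s => f s * g s) x (a * g x + f x * b).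
Proof. intros. apply (derivable_pt_lim_mult f g); auto. Qed.

Lemma dscal f c x a : derivable_pt_lim f x a -> derivable_pt_lim (fun s => c * f s) x (c * a).
Proof. intros. apply (derivable_pt_lim_scal f c); auto. Qed.

Lemma dext f x a b : derivable_pt_lim f x a -> a = b -> derivable_pt_lim f x b.
Proof. intros; subst; auto. Qed.

Lemma conservation n w r u0 u :
  (forall i j, (i < n)%nat -> (j < n)%nat -> w i j = w j i) ->
  heat_solution n w r u0 u ->
  forall t, 0 <= t -> rsum n (fun i => Dw n w r i * u t i) = rsum n (fun i => Dw n w r i * u0 i).
Proof. intros Hs [H0 Hd] t Ht.
  assert (HD : forall s, derivable_pt_lim (fun s => rsum n (fun i => Dw n w r i * u s i)) s 0).
  { intros s. eapply dext. apply (dsum n (fun i s => Dw n w r i * u s i) (fun i => Dw n w r i * (- lap n w r (u s) i))).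
    intros i Hi. apply dscal. apply Hd; auto.
    rewrite (rsum_ext _ _ (fun i => - (Dw n w r i * 1 * lap n w r (u s) i))) by (intros; ring).
    rewrite (rsum_ext _ _ (fun i => -1 * (Dw n w r i * 1 * lap n w r (u s) i))) by (intros; ring).
    rewrite rsum_scal. change (rsum n (fun i => Dw n w r i * 1 * lap n w r (u s) i)) with (ip n w r (fun _ => 1) (lap n w r (u s))).
    rewrite ip_lap, Bf_const by auto. ring. }
  destruct (Rle_lt_or_eq_dec 0 t Ht) as [Hlt|Heq].
  - destruct (MVT_cor2 _ (fun _ => 0) 0 t Hlt (fun c _ => HD c)) as [c [Hc _]].
    rewrite (rsum_ext n (fun i => Dw n w r i * u0 i) (fun i => Dw n w r i * u 0 i)). lra.
    intros; rewrite H0; auto.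
  - subst. apply rsum_ext. intros; rewrite H0; auto.
Qed.

Lemma dsubc f c x a : derivable_pt_lim f x a -> derivable_pt_lim (fun s => f s - c) x a.
Proof. intros H. eapply dext. apply (derivable_pt_lim_minus f (fct_cte c) x a 0 H (derivable_pt_lim_const c x)). ring. Qed.

Lemma dexp2 k x : derivable_pt_lim (fun s => exp (k * s)) x (exp (k * x) * (k * 1)).
Proof. apply (derivable_pt_lim_comp (fun s => k * s) exp). apply dscal. apply derivable_pt_lim_id.
  apply derivable_pt_lim_exp. Qed.

Lemma energy_decay n w r lam v u0 u R0 :
  (1 < n)%nat ->
  (forall i j, (i < n)%nat -> (j < n)%nat -> w i j = w j i) ->
  (forall i j, (i < n)%nat -> (j < n)%nat -> 0 <= w i j) ->
  (forall k, (S k < n)%nat -> lam k <= lam (S k)) ->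
  (forall k i, (k < n)%nat -> (i < n)%nat -> lap n w r (v k) i = lam k * v k i) ->
  (forall c : nat -> R,
        (forall i, (i < n)%nat -> rsum n (fun k => c k * v k i) = 0) ->
        forall k, (k < n)%nat -> c k = 0) ->
  heat_solution n w r u0 u ->
  rsum n (fun i => Dw n w r i * u0 i) = R0 * rsum n (fun i => Dw n w r i) ->
  forall tau, 0 <= tau ->
  rsum n (fun i => Dw n w r i * ((u tau i - R0) * (u tau i - R0))) * exp (2 * lam 1%nat * tau)
  <= rsum n (fun i => Dw n w r i * ((u 0 i - R0) * (u 0 i - R0))).
Proof. intros Hn Hs Hp Hsort Hev Hind Hu HR tau Htau.
  pose proof Hu as [Hu0 Hd].
  set (E := fun s => rsum n (fun i => Dw n w r i * ((u s i - R0) * (u s i - R0)))).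
  set (Ed := fun s => rsum n (fun i => Dw n w r i * (- lap n w r (u s) i * (u s i - R0) + (u s i - R0) * - lap n w r (u s) i))).
  assert (HE : forall s, derivable_pt_lim E s (Ed s)).
  { intros s. unfold E, Ed. apply (dsum n (fun i s => Dw n w r i * ((u s i - R0) * (u s i - R0)))).
    intros i Hi. apply dscal. apply (dmul (fun s => u s i - R0) (fun s => u s i - R0)); apply dsubc; apply Hd; auto. }
  assert (HEd : forall s, 0 <= s -> Ed s <= - 2 * lam 1%nat * E s).
  { intros s Hs0. set (f := fun i => u s i - R0).
    assert (A1 : Ed s = -2 * Bf n w f f).
    { unfold Ed. unfold f at 2. rewrite Bf_shift by auto. rewrite <- (ip_lap n w r). unfold ip. rewrite <- rsum_scal.
      apply rsum_ext; intros; unfold f; ring. }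
    assert (A2 : E s = ip n w r f f). { unfold E, ip, f. apply rsum_ext; intros; ring. }
    assert (A3 : ip n w r f (fun _ => 1) = 0).
    { unfold ip, f. rewrite (rsum_ext _ _ (fun i => Dw n w r i * u s i - R0 * Dw n w r i)) by (intros; ring).
      rewrite rsum_minus, rsum_scal. rewrite (conservation n w r u0 u Hs Hu s Hs0). rewrite HR. change (rsum n (Dw n w r)) with (rsum n (fun i => Dw n w r i)). ring. }
    pose proof (poincare n w r lam v f Hn Hs Hp Hsort Hev Hind A3). rewrite A1, A2. lra. }
  set (h := fun s => E s * exp (2 * lam 1%nat * s)).
  assert (Hh : forall s, derivable_pt_lim h s (Ed s * exp (2 * lam 1%nat * s) + E s * (exp (2 * lam 1%nat * s) * (2 * lam 1%nat * 1)))).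
  { intros s. unfold h. apply (dmul E (fun s => exp (2 * lam 1%nat * s))). apply HE. apply (dexp2 (2 * lam 1%nat)). }
  change (h tau <= E 0).
  replace (E 0) with (h 0) by (unfold h; rewrite Rmult_0_r, exp_0; ring).
  destruct (Rle_lt_or_eq_dec 0 tau Htau) as [Hlt|Heq]; [|subst; lra].
  destruct (MVT_cor2 h _ 0 tau Hlt (fun c _ => Hh c)) as [c [Hc [Hc1 Hc2]]].
  pose proof (HEd c ltac:(lra)). pose proof (exp_pos (2 * lam 1%nat * c)).
  assert (Ed c * exp (2 * lam 1%nat * c) + E c * (exp (2 * lam 1%nat * c) * (2 * lam 1%nat * 1)) <= 0).
  { replace (Ed c * exp (2 * lam 1%nat * c) + E c * (exp (2 * lam 1%nat * c) * (2 * lam 1%nat * 1)))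
      with ((Ed c + 2 * lam 1%nat * E c) * exp (2 * lam 1%nat * c)) by ring.
    assert (Ed c + 2 * lam 1%nat * E c <= 0) by lra. nra. }
  nra.
Qed.

Lemma rminn_le f m i : (i <= m)%nat -> rminn f m <= f i.
Proof. induction m; simpl; intros H. assert (i = 0%nat) by lia. subst; lra.
  destruct (Nat.eq_dec i (S m)). subst. apply Rmin_r.
  eapply Rle_trans. apply Rmin_l. apply IHm; lia. Qed.

Lemma rminn_pos f m : (forall i, (i <= m)%nat -> 0 < f i) -> 0 < rminn f m.
Proof. induction m; simpl; intros H. apply H; lia.
  apply Rmin_case_strong; intros. apply IHm; intros; apply H; lia. apply H; lia. Qed.

Theorem mainTheorem11
  (n : nat) (w : nat -> nat -> R) (r : R)
  (Hr : 0 <= r <= 1)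
  (Hw : weighted_graph n w)
  (Hconn : connected n w)
  (S : nat -> bool)
  (HSne : exists i, (i < n)%nat /\ S i = true)
  (HSnV : exists i, (i < n)%nat /\ S i = false)
  (HRS : vol n w r S / vol n w r fullset <> 1/2)
  (lam : nat -> R) (Hlam : eigenvalue_list n w r lam)
  (tau : R)
  (Htau : tau > / lam 1%nat *
            ln (sqrt (vol n w r S) * sqrt (vol n w r (complement S)) /
                (sqrt (vol n w r fullset) *
                 Rabs (vol n w r S / vol n w r fullset - 1/2) *
                 Rpower (dmin n w) (r / 2))))
  (u : R -> nat -> R) (Hu : heat_solution n w r (chi S) u) :
  (vol n w r S / vol n w r fullset > 1/2 ->
     forall i, (i < n)%nat -> u tau i >= 1/2) /\
  (vol n w r S / vol n w r fullset < 1/2 ->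
     forall i, (i < n)%nat -> ~ (u tau i >= 1/2)).
Proof.
  destruct Hw as [Hs [Hp [_ Hdeg]]]. destruct Hlam as [Hsort [v [Hev Hind]]].
  destruct HSne as [i0 [Hi0 HS0]]. destruct HSnV as [i1 [Hi1 HS1]].
  assert (Hii : i0 <> i1) by (intro; subst; congruence).
  assert (Hn : (1 < n)%nat) by lia.
  pose proof (lam1_pos n w r lam v Hn Hs Hp Hconn Hsort Hev Hind) as Hl1.
  assert (Ha : vol n w r S = rsum n (fun i => Dw n w r i * chi S i)).
  { unfold vol, Dw. apply rsum_ext; intros; ring. }
  assert (HV : vol n w r fullset = rsum n (fun i => Dw n w r i)).
  { unfold vol, Dw, chi, fullset. apply rsum_ext; intros; ring. }
  assert (Hb : vol n w r (complement S) = vol n w r fullset - vol n w r S).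
  { rewrite Ha, HV, <- rsum_minus. unfold vol, Dw, chi, complement. apply rsum_ext; intros.
    destruct (S i); simpl; ring. }
  set (a := vol n w r S) in *. set (V := vol n w r fullset) in *. set (b := vol n w r (complement S)) in *.
  assert (Hapos : 0 < a).
  { rewrite Ha. apply (rsum_pos _ _ i0); auto. intros k _. pose proof (Dw_pos n w r k). unfold chi; destruct (S k); lra.
    pose proof (Dw_pos n w r i0). unfold chi; rewrite HS0; lra. }
  assert (Hbpos : 0 < b).
  { assert (0 < rsum n (fun i => Dw n w r i * (1 - chi S i))).
    { apply (rsum_pos _ _ i1); auto. intros k _. pose proof (Dw_pos n w r k). unfold chi; destruct (S k); lra.
      pose proof (Dw_pos n w r i1). unfold chi; rewrite HS1; lra. }
    rewrite (rsum_ext _ _ (fun i => Dw n w r i - Dw n w r i * chi S i)) in H by (intros; ring).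
    rewrite rsum_minus in H. change (rsum n (Dw n w r)) with (rsum n (fun i => Dw n w r i)) in H. rewrite <- Ha, <- HV in H. lra. }
  assert (HVpos : 0 < V) by lra.
  set (R0 := a / V) in *.
  assert (HR0 : rsum n (fun i => Dw n w r i * chi S i) = R0 * rsum n (fun i => Dw n w r i)).
  { rewrite <- Ha, <- HV. unfold R0. field. lra. }
  assert (Htau0 : 0 <= tau -> rsum n (fun i => Dw n w r i * ((u tau i - R0) * (u tau i - R0))) * exp (2 * lam 1%nat * tau)
          <= rsum n (fun i => Dw n w r i * ((u 0 i - R0) * (u 0 i - R0)))).
  { apply (energy_decay n w r lam v (chi S) u R0); auto. }
  set (E0 := rsum n (fun i => Dw n w r i * ((u 0 i - R0) * (u 0 i - R0)))) in *.
  assert (HE0' : E0 = rsum n (fun i => Dw n w r i * ((chi S i - R0) * (chi S i - R0)))).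
  { unfold E0. apply rsum_ext. intros i Hi. destruct Hu as [Hu0 _]. rewrite Hu0; auto. }
  assert (HE0 : E0 = a * b / V).
  { rewrite HE0'. rewrite (rsum_ext _ _ (fun i => Dw n w r i * chi S i * (1 - 2 * R0) + R0 * R0 * Dw n w r i)).
    rewrite rsum_plus, rsum_mulr, rsum_scal. change (rsum n (Dw n w r)) with (rsum n (fun i => Dw n w r i)). rewrite <- Ha, <- HV. unfold R0. rewrite Hb. field. lra.
    intros i Hi. unfold chi. destruct (S i); ring. }
  assert (Hdpos : 0 < dmin n w). { unfold dmin. apply rminn_pos. intros; apply Hdeg; lia. }
  set (m := Rpower (dmin n w) r).
  set (q := Rpower (dmin n w) (r / 2)) in *.
  assert (Hqq : q * q = m). { unfold q, m. rewrite <- Rpower_plus. f_equal. field. }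
  assert (Hmpos : 0 < m). { unfold m, Rpower. apply exp_pos. }
  assert (Hqpos : 0 < q). { unfold q, Rpower. apply exp_pos. }
  assert (HmD : forall i, (i < n)%nat -> m <= Dw n w r i).
  { intros i Hi. unfold m, Dw. apply Rle_Rpower_l. lra. split; auto. unfold dmin. apply rminn_le. lia. }
  assert (HE0m : (R0 - 1/2) * (R0 - 1/2) * m < E0).
  { rewrite HE0'.
    pose proof (rsum_two n (fun i => Dw n w r i * ((chi S i - R0) * (chi S i - R0))) i0 i1) as T.
    assert (T1 : Dw n w r i0 * ((chi S i0 - R0) * (chi S i0 - R0)) + Dw n w r i1 * ((chi S i1 - R0) * (chi S i1 - R0))
       <= rsum n (fun i => Dw n w r i * ((chi S i - R0) * (chi S i - R0)))).
    { apply T; auto. intros k _. pose proof (Dw_pos n w r k). apply Rmult_le_pos. lra. apply Rle_0_sqr. }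
    replace (chi S i0) with 1 in T1 by (unfold chi; rewrite HS0; auto). replace (chi S i1) with 0 in T1 by (unfold chi; rewrite HS1; auto).
    pose proof (HmD i0 Hi0). pose proof (HmD i1 Hi1).
    assert (m * ((1 - R0) * (1 - R0)) <= Dw n w r i0 * ((1 - R0) * (1 - R0))) by (apply Rmult_le_compat_r; [apply Rle_0_sqr|lra]).
    assert (m * ((0 - R0) * (0 - R0)) <= Dw n w r i1 * ((0 - R0) * (0 - R0))) by (apply Rmult_le_compat_r; [apply Rle_0_sqr|lra]).
    assert (HH : (R0 - 1/2) * (R0 - 1/2) < (1 - R0) * (1 - R0) + (0 - R0) * (0 - R0)) by nra.
    assert ((R0 - 1/2) * (R0 - 1/2) * m < m * ((1 - R0) * (1 - R0)) + m * ((0 - R0) * (0 - R0))) by (apply (Rmult_lt_compat_r m) in HH; lra).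
    lra. }
  set (A := sqrt a * sqrt b / (sqrt V * Rabs (R0 - 1 / 2) * q)) in *.
  assert (HRne : R0 - 1/2 <> 0) by lra.
  assert (Habs : 0 < Rabs (R0 - 1/2)) by (apply Rabs_pos_lt; auto).
  assert (HAA : A * A = E0 / ((R0 - 1/2) * (R0 - 1/2) * m)).
  { unfold A. rewrite HE0, <- Hqq.
    replace ((R0 - 1/2) * (R0 - 1/2)) with (Rabs (R0 - 1/2) * Rabs (R0 - 1/2)).
    2:{ rewrite <- Rabs_mult. apply Rabs_pos_eq. apply Rle_0_sqr. }
    pose proof (sqrt_lt_R0 V HVpos).
    replace (sqrt a * sqrt b / (sqrt V * Rabs (R0 - 1 / 2) * q) * (sqrt a * sqrt b / (sqrt V * Rabs (R0 - 1 / 2) * q)))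
      with ((sqrt a * sqrt a) * (sqrt b * sqrt b) / ((sqrt V * sqrt V) * (Rabs (R0 - 1 / 2) * Rabs (R0 - 1 / 2)) * (q * q))) by (field; lra).
    rewrite !sqrt_sqrt by lra. field. repeat split; lra. }
  assert (HApos : 0 < A).
  { unfold A. pose proof (sqrt_lt_R0 a Hapos). pose proof (sqrt_lt_R0 b Hbpos). pose proof (sqrt_lt_R0 V HVpos).
    apply Rdiv_lt_0_compat. nra. repeat apply Rmult_lt_0_compat; auto. }
  assert (HA1 : 1 < A).
  { assert (1 < A * A).
    { rewrite HAA. assert (HX : 0 < (R0 - 1/2) * (R0 - 1/2) * m).
      { apply Rmult_lt_0_compat; auto. apply Rsqr_pos_lt; auto. }
      apply (Rmult_lt_reg_r ((R0 - 1/2) * (R0 - 1/2) * m)); auto.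
      replace (E0 / ((R0 - 1 / 2) * (R0 - 1 / 2) * m) * ((R0 - 1 / 2) * (R0 - 1 / 2) * m)) with E0 by (field; lra).
      lra. }
    nra. }
  assert (HlnA : 0 < ln A) by (rewrite <- ln_1; apply ln_increasing; lra).
  assert (Hlt : ln A < lam 1%nat * tau).
  { replace (ln A) with (lam 1%nat * (/ lam 1%nat * ln A)) by (field; lra).
    apply Rmult_lt_compat_l; lra. }
  assert (Htpos : 0 <= tau).
  { assert (0 < / lam 1%nat * ln A) by (apply Rmult_lt_0_compat; auto; apply Rinv_0_lt_compat; auto). lra. }
  assert (Hexp : A * A < exp (2 * lam 1%nat * tau)).
  { replace (2 * lam 1%nat * tau) with (lam 1%nat * tau + lam 1%nat * tau) by ring. rewrite exp_plus.
    assert (A < exp (lam 1%nat * tau)). { rewrite <- (exp_ln A) by auto. apply exp_increasing; auto. }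
    nra. }
  specialize (Htau0 Htpos).
  set (Et := rsum n (fun i => Dw n w r i * ((u tau i - R0) * (u tau i - R0)))) in *.
  assert (HEt : Et < (R0 - 1/2) * (R0 - 1/2) * m).
  { assert (0 < (R0 - 1/2) * (R0 - 1/2) * m).
    { apply Rmult_lt_0_compat; auto. apply Rsqr_pos_lt; auto. }
    assert (E0 = A * A * ((R0 - 1/2) * (R0 - 1/2) * m)) by (rewrite HAA; field; split; lra).
    pose proof (exp_pos (2 * lam 1%nat * tau)).
    assert (Et * exp (2 * lam 1%nat * tau) < (R0 - 1/2) * (R0 - 1/2) * m * exp (2 * lam 1%nat * tau)) by nra.
    nra. }
  assert (Hsq : forall i, (i < n)%nat -> (u tau i - R0) * (u tau i - R0) < (R0 - 1/2) * (R0 - 1/2)).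
  { intros i Hi.
    assert (Dw n w r i * ((u tau i - R0) * (u tau i - R0)) <= Et).
    { apply (rsum_le_term n (fun i => Dw n w r i * ((u tau i - R0) * (u tau i - R0)))); auto.
      intros k _. pose proof (Dw_pos n w r k). apply Rmult_le_pos. lra. apply Rle_0_sqr. }
    pose proof (HmD i Hi).
    assert (m * ((u tau i - R0) * (u tau i - R0)) <= Dw n w r i * ((u tau i - R0) * (u tau i - R0)))
      by (apply Rmult_le_compat_r; [apply Rle_0_sqr|lra]).
    nra. }
  split; intros HR i Hi; specialize (Hsq i Hi).
  - nra.
  - nra.
Qed.
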